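(* Let $\ell_n=\Psi(L_n)$, $z_n=\Psi(Z_n)$, $h_n=\Psi(H_n)$. Let $r_L$, $r_Z$, $r_H$ be the largest real roots of $t^5-4t^4-t-1$, $t^7-3t^6-t^5-6t^4-7t^3-7t^2-5t-1$ and $t^7-t^6-7t^5-12t^4-6t^3-7t^2-4t-2$, respectively. Then $\lim_{n\to\infty}\ell_n^{1/n}=r_L\approx 4.01923$, $\lim_{n\to\infty}z_n^{1/n}=r_Z\approx 3.83256$ and $\lim_{n\to\infty}h_n^{1/n}=r_H\approx 3.81063$.
   Context: A matching of a graph is a set of pairwise vertex-disjoint edges; it is maximal if it is not a proper subset of another matching. $\Psi(G)$ is the number of maximal matchings of $G$. A benzenoid system is a connected plane graph without cut-vertices in which every bounded face is a hexagon, any two hexagonal faces being either disjoint or sharing exactly one edge (then they are adjacent). It is catacondensed if no vertex lies in three hexagons, and a benzenoid chain if moreover no hexagon is adjacent to three other hexagons; its length is its number of hexagons. In a chain, the two hexagons adjacent to only one other hexagon are terminal, the rest interior. An interior hexagon has exactly two vertices of degree 2; it is straight if these are non-adjacent and kinky if they are adjacent. $L_n$ is the benzenoid chain of length $n$ with all interior hexagons straight; $Z_n$ is the one with all interior hexagons kinky and successive kinks turning alternately in opposite directions; $H_n$ (helicene) is the one with all interior hexagons kinky and all kinks turning in the same direction (viewed as an abstract graph). *)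

(* Defs.v *)
From Stdlib Require Import Reals List Arith Bool.
Import ListNotations.

(* An edge is an (unordered, but stored in one orientation) pair of vertices. *)
Definition edge := (nat * nat)%type.

Definition edge_eqb (e f : edge) : bool :=
  Nat.eqb (fst e) (fst f) && Nat.eqb (snd e) (snd f).

Definition inE (e : edge) (M : list edge) : bool := existsb (edge_eqb e) M.

Definition disjoint_edges (e f : edge) : bool :=
  negb (Nat.eqb (fst e) (fst f) || Nat.eqb (fst e) (snd f)
        || Nat.eqb (snd e) (fst f) || Nat.eqb (snd e) (snd f)).

Fixpoint is_matching (M : list edge) : bool :=
  match M with
  | [] => true
  | e :: M' => forallb (disjoint_edges e) M' && is_matching M'
  end.

(* All sub-lists (= subsets, since the edge lists used have no duplicates). *)
Fixpoint subsets (E : list edge) : list (list edge) :=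
  match E with
  | [] => [[]]
  | e :: E' => map (cons e) (subsets E') ++ subsets E'
  end.

Definition subsetb (M M' : list edge) : bool := forallb (fun e => inE e M') M.

Definition proper_subsetb (M M' : list edge) : bool :=
  subsetb M M' && negb (subsetb M' M).

Definition is_maximal_matching (E M : list edge) : bool :=
  is_matching M &&
  forallb (fun M' => negb (is_matching M' && proper_subsetb M M')) (subsets E).

Definition Psi (E : list edge) : nat :=
  length (filter (is_maximal_matching E) (subsets E)).

(* ---------- Benzenoid chains ----------
   A hexagon is represented by its 6 vertices [b0;...;b5] in cyclic order, all hexagons
   traversed with the same orientation (so that adjacent hexagons traverse their common
   edge in opposite directions).  For the current last hexagon, b0b1 is the edge it shares
   with its predecessor.  A new hexagon is annelated on edge b_k b_(k+1), k in {2,3,4}: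
   its cycle is [b_(k+1); b_k; f; f+1; f+2; f+3] with f,...,f+3 fresh vertices.
   For an interior hexagon with shared edges b0b1 and b_k b_(k+1):
     k = 3 : the two degree-2 vertices are b2, b5 (non-adjacent)  -> straight;
     k = 2 : degree-2 vertices b4, b5 (adjacent) -> kinky, turning one way;
     k = 4 : degree-2 vertices b2, b3 (adjacent) -> kinky, turning the other way.
   (k = 1 or 5 would put a vertex in three hexagons, which is not allowed.) *)

Definition hex_step (k : nat) (st : list nat * nat * list edge) : list nat * nat * list edge :=
  let '(b, f, E) := st in
  let c := [nth (S k) b 0; nth k b 0; f; f + 1; f + 2; f + 3] in
  let newE := [(nth 1 c 0, nth 2 c 0); (nth 2 c 0, nth 3 c 0); (nth 3 c 0, nth 4 c 0);
               (nth 4 c 0, nth 5 c 0); (nth 5 c 0, nth 0 c 0)] in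
  (c, f + 4, E ++ newE).

Definition hex0 : list nat * nat * list edge :=
  ([0; 1; 2; 3; 4; 5], 6, [(0,1); (1,2); (2,3); (3,4); (4,5); (5,0)]).

(* chain_state choice m: the chain after m annelations, the i-th annelation (i = 0,1,...)
   using edge choice i of the then-last hexagon. *)
Fixpoint chain_state (choice : nat -> nat) (m : nat) : list nat * nat * list edge :=
  match m with
  | 0 => hex0
  | S m' => hex_step (choice m') (chain_state choice m')
  end.

(* Edge list of the benzenoid chain with n hexagons (n >= 1; for n = 0 this is also a
   single hexagon, irrelevant for the limits below). *)
Definition chain_edges (choice : nat -> nat) (n : nat) : list edge :=
  let '(_, _, E) := chain_state choice (pred n) in E.

(* The choice at step 0 concerns the terminal first hexagon and is immaterial up to
   isomorphism; the choice at step i >= 1 determines the shape of interior hexagon i+1. *)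
Definition L_chain (n : nat) : list edge := chain_edges (fun _ => 3) n.
Definition Z_chain (n : nat) : list edge :=
  chain_edges (fun i => if Nat.even i then 2 else 4) n.
Definition H_chain (n : nat) : list edge := chain_edges (fun _ => 2) n.

(* Polynomial evaluation from a list of coefficients, highest degree first. *)
Definition poly_eval (c : list R) (t : R) : R := fold_left (fun acc a => (acc * t + a)%R) c 0%R.

Definition largest_real_root (c : list R) (r : R) : Prop :=
  poly_eval c r = 0%R /\ forall t : R, poly_eval c t = 0%R -> (t <= r)%R.

Definition PL : list R := [1; -4; 0; 0; -1; -1]%R.
Definition PZ : list R := [1; -3; -1; -6; -7; -7; -5; -1]%R.
Definition PH : list R := [1; -1; -7; -12; -6; -7; -4; -2]%R.

Definition nth_root (x : nat) (n : nat) : R := Rpower (INR x) (/ INR n).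

(* Main.v *)
Require Import Defs.
From Stdlib Require Import Reals List Arith Bool Lia Lra Btauto.
Import ListNotations.

Definition cov (M : list edge) (x : nat) : bool :=
  existsb (fun e => Nat.eqb x (fst e) || Nat.eqb x (snd e)) M.
Definition dom (c : nat -> bool) (E : list edge) : bool :=
  forallb (fun e => c (fst e) || c (snd e)) E.

Lemma edge_eqb_eq e f : edge_eqb e f = true <-> e = f.
Proof.
  destruct e as [a b], f as [c d]; unfold edge_eqb; simpl.
  rewrite andb_true_iff, !Nat.eqb_eq; split; [intros [-> ->]|intros H; inversion H]; auto.
Qed.

Lemma inE_In e M : inE e M = true <-> In e M.
Proof.
  unfold inE; rewrite existsb_exists; split.
  - intros [x [Hx He]]; apply edge_eqb_eq in He; subst; auto.
  - intros H; exists e; split; auto; apply edge_eqb_eq; auto.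
Qed.

Lemma subsets_incl E M : In M (subsets E) -> incl M E.
Proof.
  revert M; induction E as [|e E IH]; simpl; intros M H.
  - destruct H as [<-|[]]; intros x [].
  - apply in_app_or in H; destruct H as [H|H].
    + apply in_map_iff in H; destruct H as [M' [<- HM']].
      intros x [<-|Hx]; [left; auto|right; apply (IH M'); auto].
    + intros x Hx; right; apply (IH M); auto.
Qed.

Lemma filter_in_subsets (p : edge -> bool) E : In (filter p E) (subsets E).
Proof.
  induction E as [|e E IH]; simpl; auto.
  destruct (p e); apply in_or_app; [left; apply in_map; auto | right; auto].
Qed.

Lemma disjoint_sym x y : disjoint_edges x y = disjoint_edges y x.
Proof.
  unfold disjoint_edges.
  destruct (Nat.eqb_spec (fst x) (fst y)), (Nat.eqb_spec (fst x) (snd y)),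
           (Nat.eqb_spec (snd x) (fst y)), (Nat.eqb_spec (snd x) (snd y)),
           (Nat.eqb_spec (fst y) (fst x)), (Nat.eqb_spec (fst y) (snd x)),
           (Nat.eqb_spec (snd y) (fst x)), (Nat.eqb_spec (snd y) (snd x));
   simpl; auto; lia.
Qed.

Lemma disjoint_true x y : disjoint_edges x y = true <->
  (fst x <> fst y /\ fst x <> snd y /\ snd x <> fst y /\ snd x <> snd y).
Proof.
  unfold disjoint_edges.
  destruct (Nat.eqb_spec (fst x) (fst y)), (Nat.eqb_spec (fst x) (snd y)),
           (Nat.eqb_spec (snd x) (fst y)), (Nat.eqb_spec (snd x) (snd y));
   simpl; split; intuition congruence.
Qed.

Lemma matching_pairwise M x y : is_matching M = true -> In x M -> In y M -> x <> y ->
  disjoint_edges x y = true.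
Proof.
  induction M as [|e M IH]; simpl; [tauto|].
  intros H Hx Hy Hxy; apply andb_true_iff in H as [H1 H2].
  rewrite forallb_forall in H1.
  destruct Hx as [<-|Hx], Hy as [<-|Hy]; try congruence.
  - apply H1; auto.
  - rewrite disjoint_sym; apply H1; auto.
  - apply IH; auto.
Qed.

Lemma pairwise_matching M : NoDup M ->
  (forall x y, In x M -> In y M -> x <> y -> disjoint_edges x y = true) ->
  is_matching M = true.
Proof.
  induction M as [|e M IH]; simpl; auto.
  intros Hn H; inversion Hn; subst.
  apply andb_true_iff; split.
  - apply forallb_forall; intros y Hy; apply H; auto; intros <-; contradiction.
  - apply IH; auto.
Qed.

Lemma cov_false_iff M x : cov M x = false <-> forall e, In e M -> x <> fst e /\ x <> snd e.
Proof.
  unfold cov; split.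
  - intros H e He; destruct (Nat.eqb_spec x (fst e)), (Nat.eqb_spec x (snd e)); auto;
    exfalso; assert (existsb (fun e => (x =? fst e) || (x =? snd e)) M = true)
      by (apply existsb_exists; exists e; split; auto; apply orb_true_iff;
          rewrite !Nat.eqb_eq; auto); congruence.
  - intros H; destruct (existsb (fun e => (x =? fst e) || (x =? snd e)) M) eqn:E; auto.
    apply existsb_exists in E; destruct E as [e [He Hx]].
    apply orb_true_iff in Hx; rewrite !Nat.eqb_eq in Hx.
    destruct (H e He); intuition.
Qed.

Lemma cov_true_iff M x : cov M x = true <-> exists e, In e M /\ (x = fst e \/ x = snd e).
Proof.
  unfold cov; rewrite existsb_exists; split; intros [e [He Hx]]; exists e; split; auto.
  - apply orb_true_iff in Hx; rewrite !Nat.eqb_eq in Hx; auto.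
  - apply orb_true_iff; rewrite !Nat.eqb_eq; auto.
Qed.

Lemma forallb_false {A} (p : A -> bool) l : forallb p l = false -> exists x, In x l /\ p x = false.
Proof.
  induction l as [|a l IH]; simpl; [discriminate|].
  destruct (p a) eqn:Ha; simpl; intros H.
  - destruct (IH H) as [x [? ?]]; eauto.
  - eauto.
Qed.

Lemma maximal_iff E M : NoDup E -> In M (subsets E) ->
  is_maximal_matching E M = is_matching M && dom (cov M) E.
Proof.
  intros HE HM; unfold is_maximal_matching.
  destruct (is_matching M) eqn:Hm; simpl; auto.
  apply eq_true_iff_eq; split.
  - intros H; unfold dom; apply forallb_forall; intros e He.
    destruct (cov M (fst e)) eqn:H1; auto; destruct (cov M (snd e)) eqn:H2; auto; simpl.
    exfalso.
    rewrite cov_false_iff in H1, H2.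
    set (M' := filter (fun x => inE x M || edge_eqb x e) E).
    rewrite forallb_forall in H.
    specialize (H M' (filter_in_subsets _ _)).
    assert (eM : ~ In e M).
    { intros Hin; destruct (H1 e Hin); auto. }
    assert (Hm' : is_matching M' = true).
    { apply pairwise_matching. apply NoDup_filter; auto.
      intros x y Hx Hy Hxy; unfold M' in Hx, Hy; apply filter_In in Hx as [_ Hx];
      apply filter_In in Hy as [_ Hy].
      apply orb_true_iff in Hx, Hy; rewrite inE_In, edge_eqb_eq in Hx, Hy.
      destruct Hx as [Hx| ->], Hy as [Hy| ->].
      - eapply matching_pairwise; eauto.
      - apply disjoint_true; destruct (H1 x Hx), (H2 x Hx); intuition.
      - apply disjoint_true; destruct (H1 y Hy), (H2 y Hy); intuition.
      - congruence. }
    rewrite Hm' in H; simpl in H.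
    unfold proper_subsetb, subsetb in H.
    assert (Hs : forallb (fun x => inE x M') M = true).
    { apply forallb_forall; intros x Hx; apply inE_In; unfold M'; apply filter_In; split.
      - apply (subsets_incl E M); auto.
      - apply orb_true_iff; left; apply inE_In; auto. }
    rewrite Hs in H; simpl in H.
    assert (Hs2 : forallb (fun x => inE x M) M' = false).
    { destruct (forallb _ M') eqn:F; auto.
      rewrite forallb_forall in F.
      assert (inE e M = true).
      { apply F; unfold M'; apply filter_In; split; auto.
        apply orb_true_iff; right; apply edge_eqb_eq; auto. }
      apply inE_In in H0; contradiction. }
    rewrite Hs2 in H; discriminate.
  - intros Hd; apply forallb_forall; intros M' HM'.
    destruct (is_matching M') eqn:Hm'; simpl; auto.
    destruct (proper_subsetb M M') eqn:Hp; simpl; auto.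
    exfalso.
    unfold proper_subsetb, subsetb in Hp; apply andb_true_iff in Hp as [Hp1 Hp2].
    apply negb_true_iff, forallb_false in Hp2; destruct Hp2 as [e [He HeM]].
    assert (HeE : In e E) by (apply (subsets_incl E M'); auto).
    unfold dom in Hd; rewrite forallb_forall in Hd; specialize (Hd e HeE).
    assert (exists g, In g M /\ (fst e = fst g \/ fst e = snd g \/ snd e = fst g \/ snd e = snd g)) as [g [Hg Hge]].
    { apply orb_true_iff in Hd; destruct Hd as [Hd|Hd]; apply cov_true_iff in Hd;
      destruct Hd as [g [? ?]]; exists g; intuition. }
    assert (HgM' : In g M').
    { rewrite forallb_forall in Hp1; apply inE_In; apply Hp1; auto. }
    assert (g <> e) by (intros ->; apply inE_In in Hg; congruence).
    pose proof (matching_pairwise M' g e Hm' HgM' He H) as Hd'.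
    apply disjoint_true in Hd'; intuition.
Qed.

Definition count {A} (p : A -> bool) (l : list A) : nat := length (filter p l).

Lemma Psi_good E : NoDup E ->
  Psi E = count (fun M => is_matching M && dom (cov M) E) (subsets E).
Proof.
  intros H; unfold Psi, count; f_equal; apply filter_ext_in; intros M HM; apply maximal_iff; auto.
Qed.

Definition sumL (l : list nat) : nat := fold_right plus 0 l.

Lemma sumL_app l1 l2 : sumL (l1 ++ l2) = sumL l1 + sumL l2.
Proof. induction l1; simpl; lia. Qed.

Lemma subsets_app E F : subsets (E ++ F) =
  flat_map (fun A => map (fun B => A ++ B) (subsets F)) (subsets E).
Proof.
  induction E as [|e E IH]; simpl.
  - rewrite map_id; simpl; rewrite app_nil_r; auto.
  - rewrite IH, flat_map_app; f_equal.
    rewrite !flat_map_concat_map, concat_map, !map_map; f_equal.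
    apply map_ext; intros A; rewrite map_map; auto.
Qed.

Lemma count_app {A} (p : A -> bool) l1 l2 : count p (l1 ++ l2) = count p l1 + count p l2.
Proof. unfold count; rewrite filter_app, length_app; auto. Qed.

Lemma count_flat_map {A B} (p : B -> bool) (g : A -> list B) l :
  count p (flat_map g l) = sumL (map (fun x => count p (g x)) l).
Proof. induction l; simpl; auto; rewrite count_app, IHl; auto. Qed.

Lemma count_map {A B} (p : B -> bool) (g : A -> B) l :
  count p (map g l) = count (fun x => p (g x)) l.
Proof. unfold count; induction l; simpl; auto; destruct (p (g a)); simpl; auto. Qed.

Lemma count_ext_in {A} (p q : A -> bool) l : (forall x, In x l -> p x = q x) -> count p l = count q l.
Proof. intros H; unfold count; f_equal; apply filter_ext_in; auto. Qed.

Lemma sumL_ext_in {A} (f g : A -> nat) l : (forall x, In x l -> f x = g x) ->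
  sumL (map f l) = sumL (map g l).
Proof. intros H; f_equal; apply map_ext_in; auto. Qed.

Lemma count_filter {A} (p q : A -> bool) l : count q (filter p l) = count (fun x => p x && q x) l.
Proof. unfold count; induction l; simpl; auto; destruct (p a) eqn:?, (q a) eqn:?; simpl; rewrite ?Heqb, ?Heqb0; simpl; rewrite ?IHl; auto. Qed.

Lemma sumL_cond {A} (p : A -> bool) (f : A -> nat) l :
  sumL (map (fun x => if p x then f x else 0) l) = sumL (map f (filter p l)).
Proof. induction l; simpl; auto; destruct (p a); simpl; lia. Qed.

Lemma sumL_mul_r {A} (f : A -> nat) c l : sumL (map (fun x => f x * c) l) = sumL (map f l) * c.
Proof. induction l; simpl; lia. Qed.

Lemma sumL_add {A} (f g : A -> nat) l : sumL (map (fun x => f x + g x) l) = sumL (map f l) + sumL (map g l).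
Proof. induction l; simpl; lia. Qed.

Fixpoint lbeq (l1 l2 : list bool) : bool :=
  match l1, l2 with
  | [], [] => true
  | a :: l1, b :: l2 => Bool.eqb a b && lbeq l1 l2
  | _, _ => false
  end.

Lemma lbeq_eq l1 l2 : lbeq l1 l2 = true <-> l1 = l2.
Proof.
  revert l2; induction l1 as [|a l1 IH]; destruct l2 as [|b l2]; simpl; try (split; congruence).
  rewrite andb_true_iff, eqb_true_iff, IH; split; [intros [-> ->]; auto|intros H; inversion H; auto].
Qed.

Lemma sum_delta (st : list (list bool)) (h : list bool -> nat) a :
  In a st -> NoDup st ->
  sumL (map (fun s => h s * (if lbeq a s then 1 else 0)) st) = h a.
Proof.
  induction st as [|s st IH]; simpl; [tauto|].
  intros Ha Hn; inversion Hn; subst.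
  destruct Ha as [->|Ha].
  - replace (lbeq a a) with true by (symmetry; apply lbeq_eq; auto).
    rewrite (sumL_ext_in _ (fun _ => 0)).
    + clear; induction st; simpl; lia.
    + intros x Hx; destruct (lbeq a x) eqn:E; [apply lbeq_eq in E; subst; contradiction|lia].
  - destruct (lbeq a s) eqn:E; [apply lbeq_eq in E; subst; contradiction|].
    rewrite IH; auto; lia.
Qed.

Lemma group {A} (st : list (list bool)) (f : A -> list bool) (h : list bool -> nat) l :
  NoDup st -> (forall x, In x l -> In (f x) st) ->
  sumL (map (fun x => h (f x)) l) =
  sumL (map (fun s => h s * count (fun x => lbeq (f x) s) l) st).
Proof.
  intros Hn; induction l as [|x l IH]; simpl; intros Hin.
  - clear; induction st; simpl; auto; unfold count in *; simpl in *; lia.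
  - rewrite IH by (intros; apply Hin; auto).
    rewrite <- (sum_delta st h (f x)) by auto.
    rewrite <- sumL_add; apply sumL_ext_in; intros s _.
    unfold count; simpl; destruct (lbeq (f x) s); simpl; lia.
Qed.

Definition emap (g : nat -> nat) (e : edge) : edge := (g (fst e), g (snd e)).

Lemma subsets_map g E : subsets (map (emap g) E) = map (map (emap g)) (subsets E).
Proof.
  induction E as [|e E IH]; simpl; auto.
  rewrite IH, map_app, !map_map; auto.
Qed.

Lemma forallb_map' {A B} (p : B -> bool) (f : A -> B) l :
  forallb p (map f l) = forallb (fun x => p (f x)) l.
Proof. induction l; simpl; auto; rewrite IHl; auto. Qed.

Section Relabel.
Variable g : nat -> nat.
Variable D : nat -> Prop.
Hypothesis ginj : forall i j, D i -> D j -> g i = g j -> i = j.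

Definition inD (B : list edge) := forall e, In e B -> D (fst e) /\ D (snd e).

Lemma disjoint_map x y : D (fst x) -> D (snd x) -> D (fst y) -> D (snd y) ->
  disjoint_edges (emap g x) (emap g y) = disjoint_edges x y.
Proof.
  intros; apply eq_true_iff_eq; rewrite !disjoint_true; unfold emap; simpl.
  split; intros [? [? [? ?]]]; repeat split; intro Hc; try (apply ginj in Hc; auto); congruence.
Qed.

Lemma matching_map B : inD B -> is_matching (map (emap g) B) = is_matching B.
Proof.
  induction B as [|e B IH]; simpl; auto; intros HB.
  rewrite IH by (intros x Hx; apply (HB x); right; exact Hx).
  f_equal; rewrite forallb_map'; apply eq_true_iff_eq; rewrite !forallb_forall; split;
  intros H x Hx; specialize (H x Hx);
  destruct (HB e (or_introl eq_refl)), (HB x (or_intror Hx));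
  rewrite disjoint_map in *; auto.
Qed.

Lemma cov_map B i : inD B -> D i -> cov (map (emap g) B) (g i) = cov B i.
Proof.
  intros HB Hi; apply eq_true_iff_eq; rewrite !cov_true_iff; split.
  - intros [e [He Hx]]; apply in_map_iff in He as [e' [<- He']].
    destruct (HB e' He'); exists e'; split; auto; unfold emap in Hx; simpl in Hx.
    destruct Hx as [Hx|Hx]; apply ginj in Hx; auto.
  - intros [e [He Hx]]; exists (emap g e); split; [apply in_map; auto|].
    unfold emap; simpl; destruct Hx as [->| ->]; auto.
Qed.
End Relabel.

Definition H6 (b : list nat) : list edge :=
  [(nth 1 b 0, nth 2 b 0); (nth 2 b 0, nth 3 b 0); (nth 3 b 0, nth 4 b 0);
   (nth 4 b 0, nth 5 b 0); (nth 5 b 0, nth 0 b 0)].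

Definition newc (k : nat) (b : list nat) (f : nat) : list nat :=
  [nth (S k) b 0; nth k b 0; f; f + 1; f + 2; f + 3].

Definition Inv (b : list nat) (f : nat) (E R : list edge) : Prop :=
  exists b0 b1 b2 b3 b4 b5, b = [b0;b1;b2;b3;b4;b5] /\ NoDup b /\ (forall x, In x b -> x < f) /\
  (forall e, In e E -> fst e < f /\ snd e < f) /\ E = R ++ H6 b /\
  (forall e, In e R -> ~ In (fst e) [b2;b3;b4;b5] /\ ~ In (snd e) [b2;b3;b4;b5]) /\ NoDup E.

Definition domH6 (s : list bool) : bool :=
  forallb (fun e => nth (fst e) s false || nth (snd e) s false) [(1,2);(2,3);(3,4);(4,5);(5,0)].
Definition upd (k : nat) (s t : list bool) : list bool :=
  map (fun i => nth i s false || (Nat.eqb i k && nth 1 t false) || (Nat.eqb i (S k) && nth 0 t false))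
    [0;1;2;3;4;5].
Definition Phi (k : nat) (s t : list bool) : bool :=
  negb (nth (S k) s false && nth 0 t false) && negb (nth k s false && nth 1 t false) &&
  domH6 (upd k s t).
Definition Psik (k : nat) (s t : list bool) : list bool :=
  [nth (S k) s false || nth 0 t false; nth k s false || nth 1 t false;
   nth 2 t false; nth 3 t false; nth 4 t false; nth 5 t false].

Lemma cov_app A B x : cov (A ++ B) x = cov A x || cov B x.
Proof. unfold cov; apply existsb_app. Qed.

Lemma matching_app A B : is_matching (A ++ B) =
  is_matching A && is_matching B && forallb (fun a => forallb (disjoint_edges a) B) A.
Proof.
  induction A as [|a A IH]; simpl; [destruct (is_matching B); auto|].
  rewrite IH, forallb_app; btauto.
Qed.

Lemma cross_iff A B : forallb (fun a => forallb (disjoint_edges a) B) A = true <->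
  (forall x, cov A x = true -> cov B x = false).
Proof.
  rewrite forallb_forall; split.
  - intros H x Ha; apply cov_false_iff; intros e He.
    apply cov_true_iff in Ha; destruct Ha as [a [Ha Hx]].
    specialize (H a Ha); rewrite forallb_forall in H; specialize (H e He).
    apply disjoint_true in H; intuition congruence.
  - intros H a Ha; apply forallb_forall; intros e He; apply disjoint_true.
    assert (H1 : cov B (fst a) = false) by (apply H; apply cov_true_iff; eauto).
    assert (H2 : cov B (snd a) = false) by (apply H; apply cov_true_iff; eauto).
    rewrite cov_false_iff in H1, H2.
    destruct (H1 e He), (H2 e He); intuition.
Qed.

Lemma nodup6 (b0 b1 b2 b3 b4 b5 : nat) : NoDup [b0;b1;b2;b3;b4;b5] ->
  b0 <> b1 /\ b0 <> b2 /\ b0 <> b3 /\ b0 <> b4 /\ b0 <> b5 /\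
  b1 <> b2 /\ b1 <> b3 /\ b1 <> b4 /\ b1 <> b5 /\
  b2 <> b3 /\ b2 <> b4 /\ b2 <> b5 /\ b3 <> b4 /\ b3 <> b5 /\ b4 <> b5.
Proof.
  intros H; repeat match goal with H : NoDup (_ :: _) |- _ => inversion H; subst; clear H end.
  simpl in *; intuition congruence.
Qed.

Lemma cov_sub_incl A E f : incl A E -> (forall e, In e E -> fst e < f /\ snd e < f) ->
  forall x, cov A x = true -> x < f.
Proof.
  intros Hi HE x Hx; apply cov_true_iff in Hx; destruct Hx as [e [He Hx]].
  destruct (HE e (Hi e He)); lia.
Qed.

Lemma cov_in_H6 B c0 c1 c2 c3 c4 c5 : incl B (H6 [c0;c1;c2;c3;c4;c5]) ->
  forall x, cov B x = true -> x = c0 \/ x = c1 \/ x = c2 \/ x = c3 \/ x = c4 \/ x = c5.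
Proof.
  intros Hi x Hx; apply cov_true_iff in Hx; destruct Hx as [e [He Hx]].
  specialize (Hi e He); unfold H6 in Hi; simpl in Hi.
  intuition (subst; simpl in *; auto).
Qed.

Lemma dom_ext c d X : (forall x, c x = d x) -> dom c X = dom d X.
Proof. intros H; unfold dom; induction X; simpl; auto; rewrite !H, IHX; auto. Qed.

Lemma dom_app c X Y : dom c (X ++ Y) = dom c X && dom c Y.
Proof. unfold dom; apply forallb_app. Qed.

Lemma trans_lemma b f E R k A Bm : Inv b f E R -> 2 <= k <= 4 ->
  In A (subsets E) -> In Bm (subsets (H6 (newc k b f))) ->
  (is_matching (A ++ Bm) && dom (cov (A ++ Bm)) E =
   (is_matching A && dom (cov A) R) &&
   (is_matching Bm && Phi k (map (cov A) b) (map (cov Bm) (newc k b f)))) /\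
  map (cov (A ++ Bm)) (newc k b f) = Psik k (map (cov A) b) (map (cov Bm) (newc k b f)).
Proof.
  intros [b0 [b1 [b2 [b3 [b4 [b5 [Hb [Hnd [Hbf [HEf [HER [HR HndE]]]]]]]]]]]] Hk HA HB.
  pose proof (subsets_incl _ _ HB) as HBi.
  unfold newc in HBi.
  pose proof (cov_in_H6 _ _ _ _ _ _ _ HBi) as FB.
  set (c0 := nth (S k) b 0) in *. set (c1 := nth k b 0) in *.
  assert (Hc : (c0 < f /\ c1 < f) /\ In c0 [b2;b3;b4;b5] /\ In c1 [b2;b3;b4;b5]).
  { subst c0 c1; subst b; split; [split; apply Hbf|];
    destruct k as [|[|[|[|[|k]]]]]; try lia; simpl; auto 7. }
  subst b.
  assert (Hbf' : b0 < f /\ b1 < f /\ b2 < f /\ b3 < f /\ b4 < f /\ b5 < f)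
    by (repeat split; apply Hbf; simpl; tauto).
  assert (FA := cov_sub_incl A E f (subsets_incl _ _ HA) HEf).
  assert (KA : forall j, cov A (f + j) = false).
  { intros j; destruct (cov A (f+j)) eqn:Hc'; auto; apply FA in Hc'; lia. }
  assert (KA0 : cov A f = false) by (rewrite <- (Nat.add_0_r f); apply KA).
  assert (KB : forall x, x <> c0 -> x <> c1 -> x < f -> cov Bm x = false).
  { intros x H0 H1 Hx; destruct (cov Bm x) eqn:Hc'; auto; apply FB in Hc'; lia. }
  assert (Hcross : forallb (fun a => forallb (disjoint_edges a) Bm) A =
     negb (cov A c0 && cov Bm c0) && negb (cov A c1 && cov Bm c1)).
  { apply eq_true_iff_eq; rewrite cross_iff; split.
    - intros H; rewrite andb_true_iff, !negb_true_iff, !andb_false_iff; split;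
      [destruct (cov A c0) eqn:E1; [right; apply H; auto|left; auto]
      |destruct (cov A c1) eqn:E1; [right; apply H; auto|left; auto]].
    - intros H x Hx; rewrite andb_true_iff, !negb_true_iff, !andb_false_iff in H.
      destruct (cov Bm x) eqn:Hb; auto; exfalso.
      pose proof (FA x Hx) as Hxf.
      destruct (FB x Hb) as [->|[->|Hx']].
      + destruct H as [[H|H] _]; congruence.
      + destruct H as [_ [H|H]]; congruence.
      + lia. }
  assert (KR : forall x, ~ In x [b2;b3;b4;b5] -> x < f -> cov Bm x = false).
  { intros x Hn Hx; destruct Hc as [_ [Hc0 Hc1]]; apply KB; auto; intro; subst; tauto. }
  assert (Rdom : dom (fun x => cov A x || cov Bm x) R = dom (cov A) R).
  { unfold dom; apply eq_true_iff_eq; rewrite !forallb_forall; split; intros H e He;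
    specialize (H e He); destruct (HR e He) as [Hr1 Hr2];
    (assert (HeE : In e E) by (rewrite HER; apply in_or_app; auto));
    destruct (HEf e HeE);
    rewrite (KR (fst e)), (KR (snd e)) in *; auto; rewrite ?orb_false_r in *; auto. }
  split.
  - rewrite matching_app, Hcross, (dom_ext _ (fun x => cov A x || cov Bm x)) by apply cov_app.
    rewrite HER, dom_app, Rdom.
    subst c0 c1.
    pose proof (nodup6 _ _ _ _ _ _ Hnd) as Hne.
    destruct k as [|[|[|[|[|k]]]]]; try lia; unfold Phi, upd, domH6, H6, dom; simpl; simpl in KB.
    all: destruct Hne as [? [? [? [? [? [? [? [? [? [? [? [? [? [? ?]]]]]]]]]]]]]].
    all: rewrite ?(KB b0), ?(KB b1), ?(KB b2), ?(KB b3), ?(KB b4), ?(KB b5)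
      by (try assumption; try (apply not_eq_sym; assumption); tauto).
    all: btauto.
  - subst c0 c1; unfold Psik; simpl; rewrite !cov_app, KA0, !KA; simpl.
    destruct k as [|[|[|[|[|k]]]]]; try lia; simpl; reflexivity.
Qed.

Lemma Inv_step b f E R k : Inv b f E R -> 2 <= k <= 4 ->
  Inv (newc k b f) (f + 4) (E ++ H6 (newc k b f)) E.
Proof.
  intros [b0 [b1 [b2 [b3 [b4 [b5 [Hb [Hnd [Hbf [HEf [HER [HR HndE]]]]]]]]]]]] Hk.
  assert (Hc : (nth (S k) b 0 < f /\ nth k b 0 < f) /\ nth (S k) b 0 <> nth k b 0).
  { subst b; pose proof (nodup6 _ _ _ _ _ _ Hnd) as Hne; split; [split; apply Hbf|];
    destruct k as [|[|[|[|[|k]]]]]; try lia; simpl; try tauto;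
    apply not_eq_sym; tauto. }
  destruct Hc as [[Hc0 Hc1] Hc01].
  unfold newc.
  exists (nth (S k) b 0), (nth k b 0), f, (f+1), (f+2), (f+3).
  split; [reflexivity|].
  split.
  { repeat constructor; cbn [In]; intuition lia. }
  split.
  { intros x Hx; cbn [In] in Hx; intuition lia. }
  split.
  { intros e He; apply in_app_or in He; destruct He as [He|He].
    - destruct (HEf e He); lia.
    - unfold H6 in He; cbn [nth In] in He; intuition (subst; cbn [fst snd]; lia). }
  split; [reflexivity|].
  split.
  { intros e He; destruct (HEf e He); cbn [In]; intuition lia. }
  apply NoDup_app; auto.
  - unfold H6; cbn [nth]; repeat constructor; cbn [In]; intuition (try congruence);
    match goal with H : (_, _) = (_, _) |- _ => inversion H end; lia.
  - intros e He He'; destruct (HEf e He); unfold H6 in He'; cbn [nth In] in He';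
    intuition (subst; cbn [fst snd] in *; lia).
Qed.

Definition hexE0 : list edge := [(0,1); (1,2); (2,3); (3,4); (4,5); (5,0)].

Lemma Inv_base : Inv [0;1;2;3;4;5] 6 hexE0 [(0,1)].
Proof.
  exists 0, 1, 2, 3, 4, 5; split; [reflexivity|].
  split; [repeat constructor; simpl; intuition congruence|].
  split; [intros x Hx; simpl in Hx; intuition lia|].
  split; [intros e He; simpl in He; intuition (subst; simpl; lia)|].
  split; [reflexivity|].
  split; [intros e He; simpl in He; intuition (subst; simpl in *; intuition congruence)|].
  repeat constructor; simpl; intuition congruence.
Qed.

Fixpoint allb (n : nat) : list (list bool) :=
  match n with
  | 0 => [[]]
  | S n => map (cons true) (allb n) ++ map (cons false) (allb n)
  end.

Definition states := allb 6.

Lemma allb_in n l : length l = n -> In l (allb n).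
Proof.
  revert l; induction n as [|n IH]; intros [|a l] Hl; simpl in *; try discriminate; auto.
  apply in_or_app; destruct a; [left|right]; apply in_map; apply IH; lia.
Qed.

Lemma allb_nodup n : NoDup (allb n).
Proof.
  induction n as [|n IH]; simpl; [repeat constructor; simpl; tauto|].
  apply NoDup_app.
  - apply NoDup_map_NoDup_ForallPairs; auto; intros x y _ _ H; inversion H; auto.
  - apply NoDup_map_NoDup_ForallPairs; auto; intros x y _ _ H; inversion H; auto.
  - intros a H1 H2; apply in_map_iff in H1, H2; destruct H1 as [x [<- _]];
    destruct H2 as [y [H _]]; discriminate.
Qed.

Lemma states_nodup : NoDup states.
Proof. apply allb_nodup. Qed.

Lemma map_in_states (c : nat -> bool) b : length b = 6 -> In (map c b) states.
Proof. intros H; apply allb_in; rewrite length_map; auto. Qed.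

Definition c6 : list nat := [0;1;2;3;4;5].

Definition T (k : nat) (s s' : list bool) : nat :=
  count (fun B => is_matching B && Phi k s (map (cov B) c6) && lbeq (Psik k s (map (cov B) c6)) s')
    (subsets (H6 c6)).

Definition Ncount (b : list nat) (R E : list edge) (s : list bool) : nat :=
  count (fun A => is_matching A && dom (cov A) R && lbeq (map (cov A) b) s) (subsets E).

Lemma relabel_count (c : list nat) (Q : list bool -> bool) :
  length c = 6 -> NoDup c ->
  count (fun B => is_matching B && Q (map (cov B) c)) (subsets (H6 c)) =
  count (fun B => is_matching B && Q (map (cov B) c6)) (subsets (H6 c6)).
Proof.
  intros Hl Hn.
  set (g := fun i => nth i c 0).
  assert (HH : H6 c = map (emap g) (H6 c6)) by reflexivity.
  assert (Hc : c = map g c6).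
  { destruct c as [|c0 [|c1 [|c2 [|c3 [|c4 [|c5 [|c' c]]]]]]]; simpl in Hl; try lia; reflexivity. }
  assert (ginj : forall i j, i < 6 -> j < 6 -> g i = g j -> i = j).
  { intros i j Hi Hj Heq; apply (proj1 (NoDup_nth c 0) Hn); try lia; exact Heq. }
  rewrite HH, subsets_map, count_map; apply count_ext_in; intros B0 HB0.
  assert (HD : inD (fun i => i < 6) B0).
  { clear Hc HH ginj; intros e He; apply (subsets_incl _ _ HB0) in He; unfold H6, c6 in He; simpl in He;
    intuition (subst; simpl; lia). }
  rewrite (matching_map g (fun i => i < 6)) by auto.
  f_equal; f_equal.
  rewrite Hc at 1; rewrite map_map; apply map_ext_in; intros i Hi.
  apply (cov_map g (fun i => i < 6)); auto.
  unfold c6 in Hi; simpl in Hi; intuition lia.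
Qed.

Lemma Inv_len_nodup b f E R : Inv b f E R -> length b = 6 /\ NoDup b.
Proof. intros [b0 [b1 [b2 [b3 [b4 [b5 [Hb [Hnd _]]]]]]]]; subst; auto. Qed.

Lemma Inv_nodupE b f E R : Inv b f E R -> NoDup E.
Proof. intros [b0 [b1 [b2 [b3 [b4 [b5 [Hb [Hnd [_ [_ [_ [_ H]]]]]]]]]]]]; auto. Qed.

Lemma step_count b f E R k s' : Inv b f E R -> 2 <= k <= 4 ->
  Ncount (newc k b f) E (E ++ H6 (newc k b f)) s' =
  sumL (map (fun s => Ncount b R E s * T k s s') states).
Proof.
  intros HI Hk.
  pose proof (Inv_len_nodup _ _ _ _ (Inv_step _ _ _ _ _ HI Hk)) as [Hcl Hcn].
  pose proof (Inv_len_nodup _ _ _ _ HI) as [Hbl _].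
  set (c := newc k b f) in *.
  unfold Ncount at 1.
  rewrite subsets_app, count_flat_map.
  rewrite (sumL_ext_in _ (fun A => if is_matching A && dom (cov A) R then T k (map (cov A) b) s' else 0)).
  2:{ intros A HA; rewrite count_map.
      rewrite (count_ext_in _ (fun B => (is_matching A && dom (cov A) R) &&
              (is_matching B && (Phi k (map (cov A) b) (map (cov B) c) &&
               lbeq (Psik k (map (cov A) b) (map (cov B) c)) s')))).
      2:{ intros B HB; destruct (trans_lemma b f E R k A B HI Hk HA HB) as [H1 H2].
          fold c in H1, H2; rewrite H1, H2; btauto. }
      destruct (is_matching A && dom (cov A) R); cbn [andb].
      - unfold T.
        transitivity (count (fun B => is_matching B && (fun t => Phi k (map (cov A) b) t &&
             lbeq (Psik k (map (cov A) b) t) s') (map (cov B) c)) (subsets (H6 c))).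
        { apply count_ext_in; intros; cbn beta; btauto. }
        etransitivity; [apply (relabel_count c (fun t => Phi k (map (cov A) b) t &&
             lbeq (Psik k (map (cov A) b) t) s')); auto|].
        apply count_ext_in; intros; cbn beta; btauto.
      - unfold count; clear; induction (subsets (H6 c)); simpl; auto. }
  rewrite sumL_cond.
  rewrite (group states (fun A => map (cov A) b) (fun s => T k s s')).
  2: apply states_nodup.
  2: intros; apply map_in_states; auto.
  apply sumL_ext_in; intros s _; rewrite count_filter; unfold Ncount; lia.
Qed.

Definition dot (r v : list nat) : nat := sumL (map (fun p => fst p * snd p) (combine r v)).
Definition Tm (k : nat) : list (list nat) := map (fun s' => map (fun s => T k s s') states) states.
Definition stepL (k : nat) (v : list nat) : list nat := map (fun row => dot row v) (Tm k).

Fixpoint iter {V} (F : V -> V) (m : nat) (x : V) : V :=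
  match m with 0 => x | S m => F (iter F m x) end.

Lemma combine_map {X Y Z} (f : X -> Y) (g : X -> Z) l :
  combine (map f l) (map g l) = map (fun x => (f x, g x)) l.
Proof. induction l; simpl; f_equal; auto. Qed.

Lemma dot_map {X} (f g : X -> nat) l : dot (map f l) (map g l) = sumL (map (fun x => f x * g x) l).
Proof. unfold dot; rewrite combine_map, map_map; auto. Qed.

Lemma count_sum_filter {X} (p q : X -> bool) l :
  count (fun x => p x && q x) l = sumL (map (fun x => if q x then 1 else 0) (filter p l)).
Proof.
  unfold count; induction l as [|x l IH]; simpl; auto.
  destruct (p x) eqn:Hp; destruct (q x) eqn:Hq; simpl; rewrite ?Hp, ?Hq; simpl; lia.
Qed.

Definition Rof (choice : nat -> nat) (m : nat) : list edge :=
  match m with 0 => [(0,1)] | S m' => snd (chain_state choice m') end.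

Definition cb choice m := fst (fst (chain_state choice m)).
Definition cf choice m := snd (fst (chain_state choice m)).
Definition cE choice m := snd (chain_state choice m).

Lemma chain_S choice m : chain_state choice (S m) =
  (newc (choice m) (cb choice m) (cf choice m), cf choice m + 4,
   cE choice m ++ H6 (newc (choice m) (cb choice m) (cf choice m))).
Proof.
  unfold cb, cf, cE; simpl; destruct (chain_state choice m) as [[b f] E]; reflexivity.
Qed.

Section Chain.
Variable choice : nat -> nat.
Hypothesis Hch : forall m, 2 <= choice m <= 4.

Lemma Inv_chain m : Inv (cb choice m) (cf choice m) (cE choice m) (Rof choice m).
Proof.
  induction m as [|m IH].
  - apply Inv_base.
  - unfold cb, cf, cE at 1; rewrite chain_S; simpl.
    apply (Inv_step _ _ _ (Rof choice m)); auto.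
Qed.

Definition V0 : list nat := map (Ncount [0;1;2;3;4;5] [(0,1)] hexE0) states.

Definition Vsem m := map (Ncount (cb choice m) (Rof choice m) (cE choice m)) states.

Lemma Vsem_S m : Vsem (S m) = stepL (choice m) (Vsem m).
Proof.
  unfold Vsem at 1, stepL, Tm; rewrite map_map.
  apply map_ext; intros s'.
  unfold cb at 1, cE at 1; rewrite chain_S; simpl fst; simpl snd.
  replace (Rof choice (S m)) with (cE choice m) by reflexivity.
  rewrite step_count with (R := Rof choice m) by (auto; apply Inv_chain).
  unfold Vsem; rewrite dot_map; apply sumL_ext_in; intros; lia.
Qed.

Lemma Vsem_iter m : Vsem m = iter (fun v => v) 0 (Vsem m).
Proof. reflexivity. Qed.

Definition U : list nat := map (fun s => if domH6 s then 1 else 0) states.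

Lemma Psi_Vsem m : Psi (cE choice m) = dot U (Vsem m).
Proof.
  pose proof (Inv_chain m) as HI.
  rewrite Psi_good by (eapply Inv_nodupE; eauto).
  destruct HI as [b0 [b1 [b2 [b3 [b4 [b5 [Hb [Hnd [_ [_ [HER _]]]]]]]]]]].
  unfold U, Vsem; rewrite dot_map.
  rewrite HER.
  rewrite (count_ext_in _ (fun A => (is_matching A && dom (cov A) (Rof choice m)) &&
                                    domH6 (map (cov A) (cb choice m)))).
  2:{ intros A _; rewrite dom_app, andb_assoc; f_equal; rewrite Hb; reflexivity. }
  rewrite count_sum_filter.
  rewrite (group states (fun A => map (cov A) (cb choice m)) (fun s => if domH6 s then 1 else 0)).
  2: apply states_nodup.
  2:{ intros; apply map_in_states; rewrite Hb; reflexivity. }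
  apply sumL_ext_in; intros s _; rewrite count_filter; unfold Ncount; destruct (domH6 s); lia.
Qed.
End Chain.

Section Rec.
Variable V : Type.
Variable P : V -> Prop.
Variable add : V -> V -> V.
Variable sc : nat -> V -> V.
Variable Fm : V -> V.
Hypothesis addP : forall x y, P x -> P y -> P (add x y).
Hypothesis scP : forall a x, P x -> P (sc a x).
Hypothesis FP : forall x, P x -> P (Fm x).
Hypothesis Fadd : forall x y, P x -> P y -> Fm (add x y) = add (Fm x) (Fm y).
Hypothesis Fsc : forall a x, P x -> Fm (sc a x) = sc a (Fm x).

Fixpoint lc (l : list (nat * nat)) (Y : nat -> V) (m : nat) : V :=
  match l with
  | [] => Y m
  | p :: l' => match l' with
               | [] => sc (fst p) (Y (m + snd p))
               | _ => add (sc (fst p) (Y (m + snd p))) (lc l' Y m)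
               end
  end.

Variable Y : nat -> V.
Hypothesis YS : forall m, Y (S m) = Fm (Y m).
Hypothesis Y0 : P (Y 0).

Lemma Yp m : P (Y m).
Proof. induction m; auto; rewrite YS; auto. Qed.

Lemma lcP l m : P (lc l Y m).
Proof.
  induction l as [|p l IH]; simpl; [apply Yp|].
  destruct l; auto using Yp.
Qed.

Lemma F_lc l m : l <> [] -> Fm (lc l Y m) = lc l Y (S m).
Proof.
  intros Hl; induction l as [|p l IH]; [congruence|].
  simpl lc; destruct l as [|q l].
  - rewrite Fsc by apply Yp; rewrite <- YS; reflexivity.
  - rewrite Fadd, Fsc, IH by (auto using Yp, lcP; congruence).
    rewrite <- YS; reflexivity.
Qed.

Lemma rec_all l d : l <> [] -> Y d = lc l Y 0 -> forall m, Y (m + d) = lc l Y m.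
Proof.
  intros Hl H0; induction m as [|m IH]; simpl; auto.
  rewrite YS, IH, F_lc; auto.
Qed.

Variable phi : V -> nat.
Hypothesis phi_add : forall x y, P x -> P y -> phi (add x y) = phi x + phi y.
Hypothesis phi_sc : forall a x, P x -> phi (sc a x) = a * phi x.

Lemma phi_lc l m : l <> [] -> phi (lc l Y m) = sumL (map (fun p => fst p * phi (Y (m + snd p))) l).
Proof.
  intros Hl; induction l as [|p l IH]; [congruence|].
  simpl lc; destruct l as [|q l].
  - simpl; rewrite phi_sc by apply Yp; lia.
  - rewrite phi_add, phi_sc, IH by (auto using Yp, lcP; congruence).
    simpl; lia.
Qed.
End Rec.

Definition vadd (x y : list nat) : list nat := map (fun p => fst p + snd p) (combine x y).
Definition vsc (a : nat) (x : list nat) : list nat := map (fun z => a * z) x.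

Lemma dot_vadd r x y : length x = length y -> dot r (vadd x y) = dot r x + dot r y.
Proof.
  unfold dot, vadd; revert x y; induction r as [|a r IH]; intros [|b x] [|c y] H; simpl in *;
  try lia. rewrite IH by lia; lia.
Qed.

Lemma dot_vsc r a x : dot r (vsc a x) = a * dot r x.
Proof.
  unfold dot, vsc; revert x; induction r as [|b r IH]; intros [|c x]; simpl; try lia.
  rewrite IH; lia.
Qed.

Lemma vadd_map {X} (f g : X -> nat) l : vadd (map f l) (map g l) = map (fun x => f x + g x) l.
Proof. unfold vadd; rewrite combine_map, map_map; auto. Qed.

Lemma length_vadd x y : length x = length y -> length (vadd x y) = length x.
Proof. intros H; unfold vadd; rewrite length_map, length_combine; lia. Qed.

Lemma length_Tm k : length (Tm k) = 64.
Proof. reflexivity. Qed.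

Lemma stepL_add k x y : length x = length y -> stepL k (vadd x y) = vadd (stepL k x) (stepL k y).
Proof.
  intros H; unfold stepL; rewrite vadd_map; apply map_ext; intros; apply dot_vadd; auto.
Qed.

Lemma stepL_sc k a x : stepL k (vsc a x) = vsc a (stepL k x).
Proof.
  unfold stepL, vsc; rewrite map_map; apply map_ext; intros; apply dot_vsc.
Qed.

Lemma length_stepL k x : length (stepL k x) = 64.
Proof. unfold stepL; rewrite length_map; apply length_Tm. Qed.

Open Scope R_scope.

Definition sumR (l : list R) : R := fold_right Rplus 0 l.

Lemma sumR_le {X} (f g : X -> R) l : (forall x, In x l -> f x <= g x) ->
  sumR (map f l) <= sumR (map g l).
Proof.
  induction l as [|x l IH]; simpl; intros H; [lra|].
  apply Rplus_le_compat; auto.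
Qed.

Lemma sumR_scale {X} (f : X -> R) k l : sumR (map (fun x => k * f x) l) = k * sumR (map f l).
Proof. induction l as [|x l IH]; simpl; [ring|rewrite IH; ring]. Qed.

Lemma INR_sumL {X} (f : X -> nat) l : INR (sumL (map f l)) = sumR (map (fun x => INR (f x)) l).
Proof. induction l as [|x l IH]; simpl; auto; rewrite plus_INR, IH; auto. Qed.

Section Bounds.
Variable a : nat -> nat.
Variable l : list (nat * nat).
Variable dd : nat.
Variable r lo hi : R.
Hypothesis Hrec : forall m, a (m + dd)%nat = sumL (map (fun p => fst p * a (m + snd p))%nat l).
Hypothesis Hoff : forall p, In p l -> (snd p < dd)%nat.
Hypothesis Hr : 0 < r.
Hypothesis Hpoly : r ^ dd = sumR (map (fun p => INR (fst p) * r ^ (snd p)) l).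
Hypothesis Hwin : forall j, (j < dd)%nat -> lo * r ^ j <= INR (a j) <= hi * r ^ j.

Lemma bounds_all m : lo * r ^ m <= INR (a m) <= hi * r ^ m.
Proof.
  induction m as [m IH] using (well_founded_induction lt_wf).
  destruct (Nat.lt_ge_cases m dd) as [Hm|Hm]; [apply Hwin; auto|].
  replace m with ((m - dd) + dd)%nat by lia.
  rewrite Hrec, INR_sumL, pow_add, Hpoly.
  rewrite <- !Rmult_assoc, (Rmult_comm lo), (Rmult_comm hi), !Rmult_assoc.
  rewrite <- !sumR_scale.
  split; apply sumR_le; intros p Hp; rewrite mult_INR;
    destruct (IH (m - dd + snd p)%nat) as [H1 H2]; try (specialize (Hoff p Hp); lia);
    rewrite pow_add in H1, H2; pose proof (pos_INR (fst p)).
  - replace (r ^ (m - dd) * (lo * (INR (fst p) * r ^ snd p)))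
      with (INR (fst p) * (lo * (r ^ (m - dd) * r ^ snd p))) by ring.
    apply Rmult_le_compat_l; auto.
  - replace (r ^ (m - dd) * (hi * (INR (fst p) * r ^ snd p)))
      with (INR (fst p) * (hi * (r ^ (m - dd) * r ^ snd p))) by ring.
    apply Rmult_le_compat_l; auto.
Qed.
End Bounds.

Lemma ln_le' x y : 0 < x -> x <= y -> ln x <= ln y.
Proof.
  intros Hx Hxy; destruct (Rle_lt_or_eq_dec _ _ Hxy) as [H|H].
  - left; apply ln_increasing; auto.
  - subst; lra.
Qed.

Lemma nthroot_limit (x : nat -> R) (r lo hi : R) :
  0 < r -> 0 < lo -> 0 < hi ->
  (forall n, (1 <= n)%nat -> lo * r ^ n <= x n <= hi * r ^ n) ->
  Un_cv (fun n => Rpower (x n) (/ INR n)) r.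
Proof.
  intros Hr Hlo Hhi Hb.
  unfold Rpower.
  cut (Un_cv (fun n => exp (/ INR n * ln (x n))) (exp (ln r))); [rewrite exp_ln; auto|].
  apply (continuity_seq exp (fun n => / INR n * ln (x n))); [apply derivable_continuous_pt, derivable_pt_exp|].
  set (M := Rabs (ln lo) + Rabs (ln hi)).
  intros eps Heps.
  destruct (INR_archimed eps M Heps) as [N HN].
  exists (S N); intros n Hn.
  unfold Rdist.
  assert (Hn1 : (1 <= n)%nat) by lia.
  destruct (Hb n Hn1) as [H1 H2].
  assert (Hrn : 0 < r ^ n) by (apply pow_lt; auto).
  assert (Hxn : 0 < x n) by (apply Rlt_le_trans with (lo * r ^ n); [apply Rmult_lt_0_compat|]; auto).
  apply ln_le' in H1; [|apply Rmult_lt_0_compat; auto].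
  apply ln_le' in H2; auto.
  rewrite ln_mult, ln_pow in H1, H2 by auto.
  assert (HnR : INR n > 0) by (apply lt_0_INR; lia).
  assert (HNn : INR N < INR n) by (apply lt_INR; lia).
  replace (/ INR n * ln (x n) - ln r) with ((ln (x n) - INR n * ln r) / INR n)
    by (field; lra).
  unfold Rdiv; rewrite Rabs_mult, Rabs_inv, (Rabs_right (INR n)) by lra.
  apply Rmult_lt_reg_r with (INR n); auto.
  rewrite Rmult_assoc, Rinv_l, Rmult_1_r by lra.
  assert (Habs : Rabs (ln (x n) - INR n * ln r) <= M).
  { unfold M; apply Rabs_le; split;
    pose proof (Rabs_pos (ln lo)); pose proof (Rabs_pos (ln hi));
    pose proof (Rle_abs (ln hi)); pose proof (Rle_abs (- ln lo)); rewrite Rabs_Ropp in *; lra. }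
  assert (0 <= INR N) by apply pos_INR.
  nra.
Qed.

Lemma sum_lt_pow (l : list (nat * nat)) dd r t : 0 < r -> r < t ->
  (forall p, In p l -> (snd p < dd)%nat) ->
  r ^ dd = sumR (map (fun p => INR (fst p) * r ^ (snd p)) l) ->
  sumR (map (fun p => INR (fst p) * t ^ (snd p)) l) < t ^ dd.
Proof.
  intros Hr Hrt Hoff Hp.
  set (q := t / r).
  assert (Hq : 1 < q) by (unfold q; apply Rmult_lt_reg_r with r; auto; unfold Rdiv;
    rewrite Rmult_assoc, Rinv_l, Rmult_1_r; lra).
  assert (Ht : t = q * r) by (unfold q; field; lra).
  destruct dd as [|d].
  { destruct l as [|p l]; simpl in *.
    - rewrite <- Hp in *; lra.
    - specialize (Hoff p (or_introl eq_refl)); lia. }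
  apply Rle_lt_trans with (q ^ d * r ^ S d).
  - rewrite Hp, <- sumR_scale; apply sumR_le; intros p Hpl.
    pose proof (pos_INR (fst p)); specialize (Hoff p Hpl).
    rewrite Ht, Rpow_mult_distr.
    replace (q ^ d * (INR (fst p) * r ^ snd p)) with (INR (fst p) * (q ^ d * r ^ snd p)) by ring.
    replace (INR (fst p) * (q ^ snd p * r ^ snd p)) with (INR (fst p) * (q ^ snd p * r ^ snd p)) by ring.
    apply Rmult_le_compat_l; auto.
    apply Rmult_le_compat_r; [apply pow_le; lra|].
    apply Rle_pow; [left; exact Hq|clear -Hoff; lia].
  - clearbody q.
    assert (0 < q ^ d) by (apply pow_lt; lra).
    assert (0 < r ^ S d) by (apply pow_lt; lra).
    replace (t ^ S d) with (q * (q ^ d * r ^ S d)) by (rewrite Ht, Rpow_mult_distr; simpl; ring).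
    rewrite <- (Rmult_1_l (q ^ d * r ^ S d)) at 1.
    apply Rmult_lt_compat_r; [apply Rmult_lt_0_compat; auto|exact Hq].
Qed.

Close Scope R_scope.

Lemma chain_edges_S choice m : chain_edges choice (S m) = cE choice m.
Proof. unfold chain_edges, cE; simpl; destruct (chain_state choice m) as [[b f] E]; auto. Qed.

Lemma Vsem_const k m : 2 <= k <= 4 -> Vsem (fun _ => k) m = iter (stepL k) m V0.
Proof.
  intros Hk; induction m as [|m IH]; [reflexivity|].
  rewrite Vsem_S by auto; simpl; rewrite IH; auto.
Qed.

Open Scope R_scope.

Lemma family (P : list R) (l : list (nat*nat)) (dd : nat) (a : nat -> nat) (X : nat -> list edge)
  (lo hi target : R) (K : nat) :
  (forall t, poly_eval P t = t ^ dd - sumR (map (fun p => INR (fst p) * t ^ (snd p)) l)) ->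
  continuity (poly_eval P) ->
  (forall p, In p l -> (snd p < dd)%nat) ->
  (forall m, a (m + dd)%nat = sumL (map (fun p => fst p * a (m + snd p))%nat l)) ->
  (forall j, (j < dd)%nat -> (1 <= a j <= K)%nat) ->
  (forall m, Psi (X (S m)) = a m) ->
  1 <= lo < hi -> poly_eval P lo < 0 -> 0 < poly_eval P hi ->
  (forall z, lo <= z <= hi -> Rabs (z - target) < / 100000) ->
  exists r, largest_real_root P r /\ Un_cv (fun n => nth_root (Psi (X n)) n) r /\
            Rabs (r - target) < / 100000.
Proof.
  intros Heq Hcont Hoff Hrec Hwin HX Hlh Hplo Phi Htar.
  destruct (IVT (poly_eval P) lo hi Hcont (proj2 Hlh) Hplo Phi) as [r [Hr Hr0]].
  assert (Hr1 : 1 <= r) by lra.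
  assert (Hrp : 0 < r) by lra.
  assert (Hpoly : r ^ dd = sumR (map (fun p => INR (fst p) * r ^ (snd p)) l)).
  { rewrite Heq in Hr0; lra. }
  exists r; split; [|split; [|apply Htar; auto]].
  - split; auto.
    intros t Ht; destruct (Rle_lt_dec t r) as [H|H]; auto.
    exfalso; pose proof (sum_lt_pow l dd r t Hrp H Hoff Hpoly).
    rewrite Heq in Ht; lra.
  - assert (Hrd : 0 < r ^ dd) by (apply pow_lt; auto).
    assert (HB := bounds_all a l dd r (/ r ^ dd) (INR K) Hrec Hoff Hpoly).
    assert (HK : (1 <= K)%nat).
    { destruct dd as [|d]; [|destruct (Hwin 0%nat); lia].
      exfalso; specialize (Hoff); destruct l as [|p l'].
      - simpl in Hpoly; lra.
      - specialize (Hoff p (or_introl eq_refl)); lia. }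
    assert (HKR : 1 <= INR K) by (apply (le_INR 1); auto).
    specialize (HB ltac:(intros j Hj; destruct (Hwin j Hj) as [H1 H2];
      apply (le_INR 1) in H1; apply le_INR in H2; simpl in H1; split;
      [ apply Rle_trans with 1; auto;
        replace (/ r ^ dd * r ^ j) with (r ^ j / r ^ dd) by (unfold Rdiv; ring);
        apply Rmult_le_reg_r with (r ^ dd); auto; unfold Rdiv;
        rewrite Rmult_assoc, Rinv_l, Rmult_1_r, Rmult_1_l by lra;
        apply Rle_pow; auto; lia
      | apply Rle_trans with (INR K); auto;
        rewrite <- (Rmult_1_r (INR K)) at 1; apply Rmult_le_compat_l; [lra|];
        apply pow_R1_Rle; auto])).
    apply (nthroot_limit _ r (/ r ^ dd / r) (INR K / r)); auto.
    + unfold Rdiv; apply Rmult_lt_0_compat; apply Rinv_0_lt_compat; auto.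
    + unfold Rdiv; apply Rmult_lt_0_compat; [lra|apply Rinv_0_lt_compat; auto].
    + intros n Hn; destruct n as [|m]; [lia|].
      rewrite HX; destruct (HB m) as [H1 H2].
      simpl pow; replace (/ r ^ dd / r * (r * r ^ m)) with (/ r ^ dd * r ^ m) by (field; lra).
      replace (INR K / r * (r * r ^ m)) with (INR K * r ^ m) by (field; lra).
      auto.
Qed.

Close Scope R_scope.

Lemma length_V0 : length V0 = 64.
Proof. unfold V0; rewrite length_map; reflexivity. Qed.

Lemma length_vsc a x : length (vsc a x) = length x.
Proof. unfold vsc; apply length_map. Qed.

Lemma const_rec k l dd : l <> [] ->
  iter (stepL k) dd V0 = lc (list nat) vadd vsc l (fun m => iter (stepL k) m V0) 0 ->
  forall m, dot U (iter (stepL k) (m + dd) V0) =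
    sumL (map (fun p => fst p * dot U (iter (stepL k) (m + snd p) V0)) l).
Proof.
  intros Hl H0 m.
  set (P := fun x : list nat => length x = 64).
  assert (addP : forall x y, P x -> P y -> P (vadd x y)) by
    (unfold P; intros x y Hx Hy; rewrite length_vadd; lia).
  assert (scP : forall a x, P x -> P (vsc a x)) by (unfold P; intros; rewrite length_vsc; auto).
  assert (FP : forall x, P x -> P (stepL k x)) by (unfold P; intros; apply length_stepL).
  assert (Fadd : forall x y, P x -> P y -> stepL k (vadd x y) = vadd (stepL k x) (stepL k y))
    by (unfold P; intros; apply stepL_add; lia).
  assert (Fsc : forall a x, P x -> stepL k (vsc a x) = vsc a (stepL k x))
    by (intros; apply stepL_sc).
  assert (phiadd : forall x y, P x -> P y -> dot U (vadd x y) = dot U x + dot U y)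
    by (unfold P; intros; apply dot_vadd; lia).
  assert (phisc : forall a x, P x -> dot U (vsc a x) = a * dot U x) by (intros; apply dot_vsc).
  set (Y := fun m => iter (stepL k) m V0).
  assert (YS : forall m, Y (S m) = stepL k (Y m)) by reflexivity.
  assert (Y0 : P (Y 0)) by apply length_V0.
  change (iter (stepL k) (m + dd) V0) with (Y (m + dd)).
  rewrite (rec_all _ P vadd vsc (stepL k) addP scP FP Fadd Fsc Y YS Y0 l dd Hl H0 m).
  apply (phi_lc _ P vadd vsc (stepL k) addP scP FP Y YS Y0 (dot U) phiadd phisc l m Hl).
Qed.

Definition stepM (M : list (list nat)) (v : list nat) : list nat := map (fun row => dot row v) M.

Lemma iter_ext {V} (f g : V -> V) x : (forall v, f v = g v) -> forall m, iter f m x = iter g m x.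
Proof. intros H m; induction m; simpl; auto; rewrite IHm; auto. Qed.

Lemma lc_ext {V} add sc l (Y Y' : nat -> V) m : (forall j, Y j = Y' j) ->
  lc V add sc l Y m = lc V add sc l Y' m.
Proof.
  intros H; induction l as [|p l IH]; simpl; auto.
  destruct l; rewrite ?IH, H; auto.
Qed.

Lemma iterM k M v0 : Tm k = M -> V0 = v0 -> forall m, iter (stepL k) m V0 = iter (stepM M) m v0.
Proof.
  intros HM Hv m; rewrite <- Hv; apply iter_ext; intros v; unfold stepL, stepM; rewrite HM; auto.
Qed.

Lemma const_rec' k M v0 l dd : Tm k = M -> V0 = v0 -> l <> [] ->
  iter (stepM M) dd v0 = lc (list nat) vadd vsc l (fun m => iter (stepM M) m v0) 0 ->
  forall m, dot U (iter (stepL k) (m + dd) V0) =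
    sumL (map (fun p => fst p * dot U (iter (stepL k) (m + snd p) V0)) l).
Proof.
  intros HM Hv Hl H0; apply const_rec; auto.
  rewrite (iterM k M v0 HM Hv); rewrite H0; apply lc_ext; intros; symmetry; apply iterM; auto.
Qed.

Definition TM2 := Eval vm_compute in Tm 2.
Definition TM3 := Eval vm_compute in Tm 3.
Definition TM4 := Eval vm_compute in Tm 4.
Definition V0c := Eval vm_compute in V0.
Lemma TM2_eq : Tm 2 = TM2. Proof. vm_compute; reflexivity. Qed.
Lemma TM3_eq : Tm 3 = TM3. Proof. vm_compute; reflexivity. Qed.
Lemma TM4_eq : Tm 4 = TM4. Proof. vm_compute; reflexivity. Qed.
Lemma V0_eq : V0 = V0c. Proof. vm_compute; reflexivity. Qed.

Definition aL (m : nat) : nat := dot U (iter (stepL 3) m V0).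

Lemma L_final : exists rL : R, largest_real_root PL rL /\
     Un_cv (fun n => nth_root (Psi (L_chain n)) n) rL /\ (Rabs (rL - (401923 / 100000)) < / 100000)%R.
Proof.
  apply (family PL [(4,4);(1,1);(1,0)]%nat 5 aL L_chain (4019233/1000000) (4019235/1000000)
     (401923/100000) 100000).
  - intros t; unfold poly_eval, PL; simpl; ring.
  - intros x; unfold poly_eval, PL; simpl; reg.
  - intros p Hp; simpl in Hp; intuition (subst; simpl; lia).
  - intros m; apply (const_rec' 3 TM3 V0c); [apply TM3_eq|apply V0_eq|discriminate|vm_compute; reflexivity].
  - intros j Hj; unfold aL; rewrite (iterM 3 TM3 V0c TM3_eq V0_eq);
    do 5 (destruct j as [|j]; [split; apply Nat.leb_le; vm_compute; reflexivity|]); lia.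
  - intros m; unfold L_chain; rewrite chain_edges_S, (Psi_Vsem (fun _ => 3)), Vsem_const;
      auto; intros; lia.
  - lra.
  - unfold poly_eval, PL; simpl; lra.
  - unfold poly_eval, PL; simpl; lra.
  - intros z Hz; apply Rabs_def1; lra.
Qed.

Definition aH (m : nat) : nat := dot U (iter (stepL 2) m V0).

Lemma H_final : exists rH : R, largest_real_root PH rH /\
     Un_cv (fun n => nth_root (Psi (H_chain n)) n) rH /\ (Rabs (rH - (381063 / 100000)) < / 100000)%R.
Proof.
  apply (family PH [(1,6);(7,5);(12,4);(6,3);(7,2);(4,1);(2,0)]%nat 7 aH H_chain
     (3810626/1000000) (3810628/1000000) (381063/100000) 100000).
  - intros t; unfold poly_eval, PH; simpl; ring.
  - intros x; unfold poly_eval, PH; simpl; reg.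
  - intros p Hp; simpl in Hp; intuition (subst; simpl; lia).
  - intros m; apply (const_rec' 2 TM2 V0c); [apply TM2_eq|apply V0_eq|discriminate|vm_compute; reflexivity].
  - intros j Hj; unfold aH; rewrite (iterM 2 TM2 V0c TM2_eq V0_eq);
    do 7 (destruct j as [|j]; [split; apply Nat.leb_le; vm_compute; reflexivity|]); lia.
  - intros m; unfold H_chain; rewrite chain_edges_S, (Psi_Vsem (fun _ => 2)), Vsem_const;
      auto; intros; lia.
  - lra.
  - unfold poly_eval, PH; simpl; lra.
  - unfold poly_eval, PH; simpl; lra.
  - intros z Hz; apply Rabs_def1; lra.
Qed.

Definition Zch : nat -> nat := fun i => if Nat.even i then 2 else 4.
Lemma Zch_bound m : 2 <= Zch m <= 4.
Proof. unfold Zch; destruct (Nat.even m); lia. Qed.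

Definition FZ (x : list nat * list nat) := (stepL 4 (snd x), stepL 2 (fst x)).
Definition FZc (x : list nat * list nat) := (stepM TM4 (snd x), stepM TM2 (fst x)).
Definition YZ m := iter FZ m (V0, V0).
Definition YZc m := iter FZc m (V0c, V0c).
Definition addZ (x y : list nat * list nat) := (vadd (fst x) (fst y), vadd (snd x) (snd y)).
Definition scZ a (x : list nat * list nat) := (vsc a (fst x), vsc a (snd x)).
Definition lZ : list (nat * nat) := [(3,6);(1,5);(6,4);(7,3);(7,2);(5,1);(1,0)].

Lemma YZ_c m : YZ m = YZc m.
Proof.
  unfold YZ, YZc; rewrite V0_eq; apply iter_ext; intros v; unfold FZ, FZc, stepL, stepM;
  rewrite TM2_eq, TM4_eq; auto.
Qed.

Definition zs m := dot U (fst (YZ m)).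
Definition zs' m := dot U (snd (YZ m)).

Lemma Z_recs : (forall m, zs (m + 7) = sumL (map (fun p => fst p * zs (m + snd p)) lZ)) /\
               (forall m, zs' (m + 7) = sumL (map (fun p => fst p * zs' (m + snd p)) lZ)).
Proof.
  set (P := fun x : list nat * list nat => length (fst x) = 64 /\ length (snd x) = 64).
  assert (addP : forall x y, P x -> P y -> P (addZ x y)) by
    (unfold P, addZ; cbn [fst snd]; intros x y [? ?] [? ?]; rewrite !length_vadd; lia).
  assert (scP : forall a x, P x -> P (scZ a x)) by
    (unfold P, scZ; cbn [fst snd]; intros a x [? ?]; rewrite !length_vsc; auto).
  assert (FP : forall x, P x -> P (FZ x)) by (unfold P, FZ; cbn [fst snd]; intros; rewrite !length_stepL; auto).
  assert (Fadd : forall x y, P x -> P y -> FZ (addZ x y) = addZ (FZ x) (FZ y))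
    by (unfold P, FZ, addZ; cbn [fst snd]; intros x y [? ?] [? ?]; rewrite !stepL_add by lia; auto).
  assert (Fsc : forall a x, P x -> FZ (scZ a x) = scZ a (FZ x))
    by (unfold FZ, scZ; cbn [fst snd]; intros; rewrite !stepL_sc; auto).
  assert (YS : forall m, YZ (S m) = FZ (YZ m)) by reflexivity.
  assert (Y0 : P (YZ 0)) by (split; apply length_V0).
  assert (H0 : YZ 7 = lc _ addZ scZ lZ YZ 0).
  { rewrite YZ_c, (lc_ext _ _ _ YZ YZc) by apply YZ_c. vm_compute; reflexivity. }
  assert (Hl : lZ <> []) by discriminate.
  pose proof (rec_all _ P addZ scZ FZ addP scP FP Fadd Fsc YZ YS Y0 lZ 7 Hl H0) as HR.
  split; intros m; unfold zs, zs'; rewrite HR.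
  - apply (phi_lc _ P addZ scZ FZ addP scP FP YZ YS Y0 (fun x => dot U (fst x))); auto.
    + unfold P, addZ; cbn [fst snd]; intros x y [? ?] [? ?]; apply dot_vadd; lia.
    + unfold scZ; cbn [fst snd]; intros; apply dot_vsc.
  - apply (phi_lc _ P addZ scZ FZ addP scP FP YZ YS Y0 (fun x => dot U (snd x))); auto.
    + unfold P, addZ; cbn [fst snd]; intros x y [? ?] [? ?]; apply dot_vadd; lia.
    + unfold scZ; cbn [fst snd]; intros; apply dot_vsc.
Qed.

Lemma zs_eq m : zs m = zs' m.
Proof.
  induction m as [m IH] using (well_founded_induction lt_wf).
  destruct (Nat.lt_ge_cases m 7) as [Hm|Hm].
  - unfold zs, zs'; rewrite YZ_c.
    do 7 (destruct m as [|m]; [vm_compute; reflexivity|]); lia.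
  - replace m with ((m - 7) + 7) by lia.
    destruct Z_recs as [H1 H2]; rewrite H1, H2.
    apply sumL_ext_in; intros p Hp; rewrite IH; auto.
    simpl in Hp; intuition (subst; simpl; lia).
Qed.

Lemma Vsem_Z m : Vsem Zch m = if Nat.even m then fst (YZ m) else snd (YZ m).
Proof.
  induction m as [|m IH]; [reflexivity|].
  rewrite Vsem_S by apply Zch_bound.
  rewrite IH, Nat.even_succ, <- Nat.negb_even; unfold Zch.
  destruct (Nat.even m); reflexivity.
Qed.

Lemma Z_final : exists rZ : R, largest_real_root PZ rZ /\
     Un_cv (fun n => nth_root (Psi (Z_chain n)) n) rZ /\ (Rabs (rZ - (383256 / 100000)) < / 100000)%R.
Proof.
  apply (family PZ lZ 7 zs Z_chain
     (3832558/1000000) (3832559/1000000) (383256/100000) 100000).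
  - intros t; unfold poly_eval, PZ; simpl; ring.
  - intros x; unfold poly_eval, PZ; simpl; reg.
  - intros p Hp; simpl in Hp; intuition (subst; simpl; lia).
  - apply Z_recs.
  - intros j Hj; unfold zs; rewrite YZ_c;
    do 7 (destruct j as [|j]; [split; apply Nat.leb_le; vm_compute; reflexivity|]); lia.
  - intros m; unfold Z_chain; fold Zch; rewrite chain_edges_S, (Psi_Vsem Zch), Vsem_Z.
    + destruct (Nat.even m); [reflexivity|symmetry; apply zs_eq].
    + apply Zch_bound.
  - lra.
  - unfold poly_eval, PZ; simpl; lra.
  - unfold poly_eval, PZ; simpl; lra.
  - intros z Hz; apply Rabs_def1; lra.
Qed.

Open Scope R_scope.

Theorem mainTheorem9 :
  (exists rL : R, largest_real_root PL rL /\
     Un_cv (fun n => nth_root (Psi (L_chain n)) n) rL /\ Rabs (rL - (401923 / 100000)) < / 100000) /\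
  (exists rZ : R, largest_real_root PZ rZ /\
     Un_cv (fun n => nth_root (Psi (Z_chain n)) n) rZ /\ Rabs (rZ - (383256 / 100000)) < / 100000) /\
  (exists rH : R, largest_real_root PH rH /\
     Un_cv (fun n => nth_root (Psi (H_chain n)) n) rH /\ Rabs (rH - (381063 / 100000)) < / 100000).
Proof.
  split; [exact L_final|split; [exact Z_final|exact H_final]].
Qed.
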